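(* There are absolute constants $\varepsilon_0\in(0,1)$ and $C>0$ such that the following holds. Let $d\ge2$, $x_0\ge3$, $f\in\mathcal{M}(x_0;d)$ and $1\le x\le x_0$, and for $1\le j\le d-1$ put $\sigma_j := \sum_{p\le x,\ f(p)=e(j/d)} \frac1p$. Let $\varepsilon\in(0,\varepsilon_0)$ with $\varepsilon P^-(d) > 1$, and assume $\sigma_m < \varepsilon \sum_{1 \leq j \leq d-1} \sigma_j$ for all $1 \leq m \leq d-1$. Then the number of $1\le\ell\le d-1$ for which $$\mathbb{D}(f^{\ell},1;x)^2 < \Big(\frac{2}{3} - C\varepsilon^{1/3}\Big) \sum_{1 \leq j \leq d-1} \sigma_j$$ is at most $C\varepsilon^{1/3} d$.
   Context: Sums over $p$ are over primes; $e(t):=e^{2\pi i t}$; $P^-(d)$ is the smallest prime factor of $d$; $\mu_d$ is the set of complex $d$-th roots of unity. For $g,h:\mathbb{N}\to\{|z|\le1\}$ and $x\ge2$, $\mathbb{D}(g,h;x):=\big(\sum_{p\le x}\frac{1-\mathrm{Re}(g(p)\overline{h(p)})}{p}\big)^{1/2}$, and $1$ denotes the constant function $1$. For $d\in\mathbb{N}$ and $x_0\ge1$, $\mathcal{M}(x_0;d)$ is the set of completely multiplicative functions $f:\mathbb{N}\to\mu_d\cup\{0\}$ such that for every $x\ge x_0$, $\max_{\alpha\in\mu_d}|\{n\le x: f(n)=\alpha\}|\le \frac{100x}{d}\prod_{p\le x,\ f(p)=0}(1-\frac1p)$. *)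

(* Defs.v *)
From Stdlib Require Import Reals Lra Lia ZArith Arith List Znumtheory.
From Coquelicot Require Import Coquelicot.
Open Scope R_scope.

Definition e (t : R) : C := (cos (2 * PI * t), sin (2 * PI * t)).

Definition Ceq_dec (a b : C) : {a = b} + {a <> b}.
Proof.
  destruct a as [a1 a2], b as [b1 b2].
  destruct (Req_EM_T a1 b1) as [H1|H1]; destruct (Req_EM_T a2 b2) as [H2|H2];
  [left; subst; reflexivity | right; congruence | right; congruence | right; congruence].
Defined.

Definition Ceqb (a b : C) : bool := if Ceq_dec a b then true else false.

Definition isprime (n : nat) : Prop := prime (Z.of_nat n).
Definition primeb (n : nat) : bool :=
  if prime_dec (Z.of_nat n) then true else false.

Definition upto (x : R) : list nat :=
  filter (fun n => if Rle_dec (INR n) x then true else false)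
         (seq 1 (Z.to_nat (up x))).

Definition primes_upto (x : R) : list nat := filter primeb (upto x).

Definition Rsum (l : list nat) (g : nat -> R) : R := fold_right Rplus 0 (map g l).
Definition Rprod (l : list nat) (g : nat -> R) : R := fold_right Rmult 1 (map g l).

Definition least_prime_factor (d : nat) : nat :=
  hd 0%nat (filter (fun q => andb (primeb q) (Nat.eqb (d mod q) 0)) (seq 2 (d - 1))).

Fixpoint Cpown (z : C) (n : nat) : C :=
  match n with O => RtoC 1 | S k => Cmult z (Cpown z k) end.

Definition in_mu (d : nat) (z : C) : Prop :=
  exists k : nat, (k < d)%nat /\ z = e (INR k / INR d).

Definition completely_multiplicative (f : nat -> C) : Prop :=
  f 1%nat = RtoC 1 /\ forall m n : nat, f (m * n)%nat = Cmult (f m) (f n).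

Definition count_val (f : nat -> C) (alpha : C) (x : R) : R :=
  INR (length (filter (fun n => Ceqb (f n) alpha) (upto x))).

Definition M_class (x0 : R) (d : nat) (f : nat -> C) : Prop :=
  completely_multiplicative f /\
  (forall n : nat, f n = RtoC 0 \/ in_mu d (f n)) /\
  (forall x : R, x0 <= x ->
     forall alpha : C, in_mu d alpha ->
       count_val f alpha x <=
       100 * x / INR d *
       Rprod (filter (fun p => Ceqb (f p) (RtoC 0)) (primes_upto x))
             (fun p => 1 - 1 / INR p)).

Definition Dist2 (g h : nat -> C) (x : R) : R :=
  Rsum (primes_upto x) (fun p => (1 - Re (Cmult (g p) (Cconj (h p)))) / INR p).

Definition sigmaj (f : nat -> C) (d : nat) (x : R) (j : nat) : R :=
  Rsum (filter (fun p => Ceqb (f p) (e (INR j / INR d))) (primes_upto x))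
       (fun p => 1 / INR p).

Definition sigma_total (f : nat -> C) (d : nat) (x : R) : R :=
  Rsum (seq 1 (d - 1)) (sigmaj f d x).

(* Main.v *)
Require Import Defs.
From Stdlib Require Import Reals List Lra Lia ZArith.
From Coquelicot Require Import Coquelicot.
Open Scope R_scope.

Lemma Cpown_e a n : Cpown (e a) n = e (a * INR n).
Proof.
  induction n as [|n IH].
  - simpl. unfold e. rewrite Rmult_0_r, Rmult_0_r, cos_0, sin_0. reflexivity.
  - cbn [Cpown]. rewrite IH. rewrite S_INR. unfold e.
    replace (2 * PI * (a * (INR n + 1))) with (2*PI*a + 2*PI*(a*INR n)) by ring.
    rewrite cos_plus, sin_plus.
    unfold Cmult; simpl. f_equal; ring.
Qed.

Lemma Re_conj1 z : Re (Cmult z (Cconj (RtoC 1))) = Re z.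
Proof. destruct z as [a b]. unfold Cmult, Cconj, RtoC, Re; simpl. ring. Qed.

Lemma Re_Cpown_le1 z n : (z = RtoC 0 \/ exists a, z = e a) -> Re (Cpown z n) <= 1.
Proof.
  intros [H|[a H]]; subst.
  - destruct n; simpl. unfold RtoC, Re; simpl; lra.
    unfold Cmult, RtoC, Re; simpl. lra.
  - rewrite Cpown_e. unfold e, Re; simpl. apply COS_bound.
Qed.

Lemma e_inj a b : 0 <= a < 1 -> 0 <= b < 1 -> e a = e b -> a = b.
Proof.
  assert (Hgen : forall a b, 0 <= a < 1 -> 0 <= b < 1 -> e a = e b -> a < b -> False).
  { clear a b. intros a b Ha Hb He Hab. unfold e in He. injection He as H1 H2.
    set (c := 2*PI*b - 2*PI*a).
    assert (Hc1 : cos c = 1).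
    { unfold c. rewrite cos_minus, <- H1, <- H2.
      pose proof (sin2_cos2 (2*PI*a)). unfold Rsqr in *. nra. }
    assert (Hs : sin c = 0).
    { unfold c. rewrite sin_minus, <- H1, <- H2. ring. }
    apply sin_eq_0_0 in Hs. destruct Hs as [z Hz].
    pose proof PI_RGT_0.
    assert (0 < IZR z * PI < 2 * PI) by (rewrite <- Hz; unfold c; nra).
    assert (0 < IZR z < 2).
    { split; [ apply (Rmult_lt_reg_r PI); lra | apply (Rmult_lt_reg_r PI); lra ]. }
    destruct H3 as [H3 H4]. apply lt_IZR in H3. apply lt_IZR in H4.
    assert (z = 1%Z) by lia. subst z. rewrite Hz in Hc1. rewrite Rmult_1_l, cos_PI in Hc1. lra. }
  intros Ha Hb He.
  destruct (Rtotal_order a b) as [H|[H|H]]; auto.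
  - exfalso; eauto.
  - exfalso. apply (Hgen b a); auto.
Qed.

Lemma Rsum_nil g : Rsum nil g = 0. Proof. reflexivity. Qed.
Lemma Rsum_cons a l g : Rsum (a :: l) g = g a + Rsum l g. Proof. reflexivity. Qed.
Lemma Rsum_app l1 l2 g : Rsum (l1 ++ l2) g = Rsum l1 g + Rsum l2 g.
Proof. induction l1; simpl; [rewrite Rsum_nil; ring|]. rewrite !Rsum_cons, IHl1. ring. Qed.
Lemma Rsum_ext_in l g h : (forall x, In x l -> g x = h x) -> Rsum l g = Rsum l h.
Proof. induction l; intros H; [reflexivity|]. rewrite !Rsum_cons, H, IHl; auto.
  intros; apply H; simpl; auto. simpl; auto. Qed.
Lemma Rsum_le_in l g h : (forall x, In x l -> g x <= h x) -> Rsum l g <= Rsum l h.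
Proof. induction l; intros H; [rewrite !Rsum_nil; lra|]. rewrite !Rsum_cons.
  apply Rplus_le_compat. apply H; simpl; auto. apply IHl; intros; apply H; simpl; auto. Qed.
Lemma Rsum_nonneg l g : (forall x, In x l -> 0 <= g x) -> 0 <= Rsum l g.
Proof. intros H. replace 0 with (Rsum l (fun _ => 0)). apply Rsum_le_in; auto.
  induction l; auto. rewrite Rsum_cons, IHl; [ring|]. intros; apply H; simpl; auto. Qed.
Lemma Rsum_plus l g h : Rsum l (fun x => g x + h x) = Rsum l g + Rsum l h.
Proof. induction l; [rewrite !Rsum_nil; ring|]. rewrite !Rsum_cons, IHl. ring. Qed.
Lemma Rsum_minus l g h : Rsum l (fun x => g x - h x) = Rsum l g - Rsum l h.
Proof. induction l; [rewrite !Rsum_nil; ring|]. rewrite !Rsum_cons, IHl. ring. Qed.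
Lemma Rsum_scal l c g : Rsum l (fun x => c * g x) = c * Rsum l g.
Proof. induction l; [rewrite !Rsum_nil; ring|]. rewrite !Rsum_cons, IHl. ring. Qed.
Lemma Rsum_const l c : Rsum l (fun _ => c) = c * INR (length l).
Proof. induction l; [rewrite Rsum_nil; simpl; ring|]. rewrite Rsum_cons, IHl.
  cbn [length]. rewrite S_INR. ring. Qed.
Lemma Rsum_swap (l1 l2 : list nat) (F : nat -> nat -> R) :
  Rsum l1 (fun a => Rsum l2 (F a)) = Rsum l2 (fun b => Rsum l1 (fun a => F a b)).
Proof. induction l1; simpl.
  - rewrite Rsum_nil. symmetry. replace 0 with (Rsum l2 (fun _ => 0)).
    apply Rsum_ext_in. intros; reflexivity. rewrite Rsum_const; ring.
  - rewrite Rsum_cons, IHl1. rewrite <- Rsum_plus. apply Rsum_ext_in. intros. rewrite Rsum_cons. ring. Qed.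
Lemma Rsum_filter (P : nat -> bool) l g :
  Rsum (filter P l) g = Rsum l (fun x => if P x then g x else 0).
Proof. induction l; [reflexivity|]. rewrite (Rsum_cons a l). cbn [filter]. destruct (P a); rewrite ?Rsum_cons, IHl; ring. Qed.

Lemma Rsum_unique (J : list nat) (b : nat -> bool) (t : nat -> R) (E : R) :
  NoDup J -> (forall j k, In j J -> In k J -> b j = true -> b k = true -> j = k) ->
  (forall j, In j J -> b j = true -> 0 <= t j <= E) -> 0 <= E ->
  Rsum J (fun j => if b j then t j else 0) <= E.
Proof.
  induction J as [|a J IH]; intros ND Hu Ht HE; [rewrite Rsum_nil; lra|].
  inversion ND; subst. rewrite Rsum_cons.
  destruct (b a) eqn:Hba.
  - replace (Rsum J (fun j => if b j then t j else 0)) with 0.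
    + assert (0 <= t a <= E) by (apply Ht; simpl; auto). lra.
    + transitivity (Rsum J (fun _ => 0)); [rewrite Rsum_const; ring|].
      apply Rsum_ext_in. intros j Hj. destruct (b j) eqn:Hbj; auto.
      assert (j = a) by (apply Hu; simpl; auto). subst; contradiction.
  - rewrite Rplus_0_l. apply IH; auto.
    + intros; apply Hu; simpl; auto.
    + intros; apply Ht; simpl; auto.
Qed.

Lemma count_le (J : list nat) (b : nat -> bool) (h : nat -> R) :
  (forall l, In l J -> 0 <= h l) -> (forall l, In l J -> b l = true -> 1 <= h l) ->
  INR (length (filter b J)) <= Rsum J h.
Proof.
  induction J as [|a J IH]; intros H0 H1; [simpl; rewrite Rsum_nil; lra|].
  rewrite Rsum_cons. simpl. 
  assert (INR (length (filter b J)) <= Rsum J h) by (apply IH; intros; [apply H0|apply H1]; simpl; auto).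
  destruct (b a) eqn:E.
  - cbn [length]. rewrite S_INR. assert (1 <= h a) by (apply H1; simpl; auto). lra.
  - assert (0 <= h a) by (apply H0; simpl; auto). lra.
Qed.

Lemma tele th n : 2 * sin (th/2) * Rsum (seq 0 n) (fun l => cos (th * INR l))
  = sin (th * INR n - th/2) + sin (th/2).
Proof.
  induction n as [|n IH].
  - simpl. rewrite Rsum_nil. replace (th*0 - th/2) with (-(th/2)) by ring. rewrite sin_neg. ring.
  - rewrite seq_S, Rsum_app, Rsum_cons, Rsum_nil. simpl (0 + n)%nat.
    rewrite Rmult_plus_distr_l, IH, S_INR.
    replace (th * (INR n + 1) - th / 2) with (th * INR n + th/2) by field.
    rewrite sin_plus, sin_minus. ring.
Qed.

Definition K (d : nat) (r : R) := Rsum (seq 0 d) (fun l => cos (2*PI*(r / INR d * INR l))).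

Lemma K_le d r : K d r <= INR d.
Proof. unfold K. transitivity (Rsum (seq 0 d) (fun _ => 1)).
  apply Rsum_le_in. intros; apply COS_bound. rewrite Rsum_const, length_seq; lra. Qed.

Lemma K_neg d r : K d (-r) = K d r.
Proof. unfold K. apply Rsum_ext_in. intros. rewrite <- cos_neg. f_equal.
  unfold Rdiv. ring. Qed.

Lemma K_zero d m : (0 < d)%nat -> (0 < m < 2 * d)%nat -> m <> d -> K d (INR m) = 0.
Proof.
  intros Hd Hm Hmd.
  assert (Dpos : 0 < INR d) by (apply lt_0_INR; lia).
  set (th := 2 * PI * (INR m / INR d)).
  assert (HK : K d (INR m) = Rsum (seq 0 d) (fun l => cos (th * INR l))).
  { unfold K. apply Rsum_ext_in. intros. f_equal. unfold th. ring. }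
  pose proof (tele th d) as Ht. rewrite <- HK in Ht.
  assert (Hs : sin (th * INR d - th/2) = - sin (th/2)).
  { replace (th * INR d - th/2) with (- (th/2) + 2 * INR m * PI).
    rewrite sin_period, sin_neg. ring. unfold th. field. lra. }
  rewrite Hs in Ht.
  assert (sin (th/2) <> 0).
  { intro H0. apply sin_eq_0_0 in H0. destruct H0 as [z Hz].
    assert (HPI := PI_RGT_0).
    assert (E : INR m = IZR z * INR d).
    { unfold th in Hz. apply (Rmult_eq_reg_r (PI / INR d)).
      replace (INR m * (PI / INR d)) with (2 * PI * (INR m / INR d) / 2) by (field; lra).
      rewrite Hz. field. lra. apply Rgt_not_eq. apply Rdiv_lt_0_compat; lra. }
    rewrite !INR_IZR_INZ, <- mult_IZR in E. apply eq_IZR in E. destruct (Z.le_gt_cases z 0); [nia|]. destruct (Z.eq_dec z 1); [subst; lia|nia]. }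
  apply (Rmult_eq_reg_l (2 * sin (th/2))). lra. 
  intro H1. apply H. lra.
Qed.

Definition cs (d j l : nat) := cos (2*PI*(INR j / INR d * INR l)).

Lemma B_eq d j k : (0 < d)%nat ->
  Rsum (seq 0 d) (fun l => cs d j l * cs d k l) = (K d (INR j - INR k) + K d (INR j + INR k))/2.
Proof.
  intros Hd. assert (Dpos : 0 < INR d) by (apply lt_0_INR; lia).
  unfold K. rewrite <- Rsum_plus. unfold Rdiv. rewrite (Rmult_comm (Rsum _ _) (/2)), <- Rsum_scal.
  apply Rsum_ext_in. intros l _. unfold cs.
  replace (2 * PI * ((INR j - INR k) * / INR d * INR l)) with
    (2*PI*(INR j / INR d * INR l) - 2*PI*(INR k / INR d * INR l)) by (field; lra).
  replace (2 * PI * ((INR j + INR k) * / INR d * INR l)) with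
    (2*PI*(INR j / INR d * INR l) + 2*PI*(INR k / INR d * INR l)) by (field; lra).
  rewrite cos_minus, cos_plus. field.
Qed.

Definition ind (a k : nat) : R := if Nat.eqb k a then 1 else 0.

Lemma B_le d j k : (1 <= j <= d - 1)%nat -> (1 <= k <= d - 1)%nat ->
  Rsum (seq 0 d) (fun l => cs d j l * cs d k l) <= INR d * (ind j k + ind (d - j) k).
Proof.
  intros Hj Hk. assert (Hd : (0 < d)%nat) by lia.
  assert (Dpos : 0 < INR d) by (apply lt_0_INR; lia).
  rewrite B_eq by auto. unfold ind.
  pose proof (K_le d (INR j - INR k)). pose proof (K_le d (INR j + INR k)).
  destruct (Nat.eqb k j) eqn:E1; destruct (Nat.eqb k (d - j)) eqn:E2; try lra.
  apply Nat.eqb_neq in E1. apply Nat.eqb_neq in E2.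
  rewrite <- plus_INR, K_zero by lia.
  destruct (Nat.lt_ge_cases k j).
  - rewrite <- minus_INR, K_zero by lia. lra.
  - replace (INR j - INR k) with (- (INR (k - j))) by (rewrite minus_INR by lia; ring).
    rewrite K_neg, K_zero by lia. lra.
Qed.

Lemma Rsum_scal_r l c g : Rsum l (fun x => g x * c) = Rsum l g * c.
Proof. rewrite Rmult_comm, <- Rsum_scal. apply Rsum_ext_in; intros; ring. Qed.

Lemma ind_sum (J : list nat) (s : nat -> R) a E : NoDup J ->
  (forall j, In j J -> 0 <= s j <= E) -> 0 <= E ->
  Rsum J (fun k => s k * ind a k) <= E.
Proof.
  intros ND Hs HE.
  transitivity (Rsum J (fun k => if Nat.eqb k a then s k else 0)).
  - right. apply Rsum_ext_in. intros. unfold ind. destruct (Nat.eqb x a); ring.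
  - apply Rsum_unique; auto.
    intros j k _ _ H1 H2. apply Nat.eqb_eq in H1, H2. congruence.
Qed.

Lemma fourier d (s : nat -> R) E : (2 <= d)%nat ->
  (forall j, In j (seq 1 (d-1)) -> 0 <= s j <= E) -> 0 <= E ->
  Rsum (seq 0 d) (fun l => (Rsum (seq 1 (d-1)) (fun j => s j * cs d j l))^2)
  <= 2 * INR d * E * Rsum (seq 1 (d-1)) s.
Proof.
  intros Hd Hs HE. set (J := seq 1 (d-1)) in *.
  assert (HJ : forall j, In j J -> (1 <= j <= d - 1)%nat).
  { intros j Hj. unfold J in Hj. apply in_seq in Hj. lia. }
  assert (Dpos : 0 < INR d) by (apply lt_0_INR; lia).
  transitivity (Rsum (seq 0 d) (fun l => Rsum J (fun j => Rsum J (fun k =>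
      s j * s k * (cs d j l * cs d k l))))).
  { right. apply Rsum_ext_in. intros l _.
    rewrite <- Rsqr_pow2. unfold Rsqr. rewrite <- Rsum_scal_r.
    apply Rsum_ext_in. intros j _. rewrite <- Rsum_scal. apply Rsum_ext_in. intros k _. ring. }
  rewrite Rsum_swap.
  transitivity (Rsum J (fun j => Rsum J (fun k => s j * s k *
      Rsum (seq 0 d) (fun l => cs d j l * cs d k l)))).
  { right. apply Rsum_ext_in. intros j _. rewrite Rsum_swap. apply Rsum_ext_in. intros k _.
    rewrite <- Rsum_scal. reflexivity. }
  transitivity (Rsum J (fun j => s j * (INR d * (Rsum J (fun k => s k * ind j k) +
      Rsum J (fun k => s k * ind (d - j) k))))).
  { apply Rsum_le_in. intros j Hj. rewrite <- Rsum_plus, <- Rsum_scal, <- Rsum_scal.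
    apply Rsum_le_in. intros k Hk.
    pose proof (B_le d j k (HJ j Hj) (HJ k Hk)).
    destruct (Hs j Hj), (Hs k Hk).
    replace (s j * (INR d * (s k * ind j k + s k * ind (d - j) k))) with
      (s j * s k * (INR d * (ind j k + ind (d - j) k))) by ring.
    apply Rmult_le_compat_l; auto. apply Rmult_le_pos; auto. }
  rewrite <- (Rsum_scal J (2*INR d*E) s). apply Rsum_le_in. intros j Hj.
  destruct (Hs j Hj).
  assert (ND : NoDup J) by apply seq_NoDup.
  pose proof (ind_sum J s j E ND Hs HE).
  pose proof (ind_sum J s (d - j) E ND Hs HE).
  replace (2 * INR d * E * s j) with (s j * (INR d * (E + E))) by ring.
  apply Rmult_le_compat_l; auto. apply Rmult_le_compat_l; lra.
Qed.

Lemma Ceqb_true a b : Ceqb a b = true -> a = b.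
Proof. unfold Ceqb. destruct (Defs.Ceq_dec a b); [auto|intro H; discriminate H]. Qed.

Lemma primes_pos x p : In p (primes_upto x) -> 0 < INR p.
Proof. unfold primes_upto, upto. intros H. apply filter_In in H as [H _].
  apply filter_In in H as [H _]. apply in_seq in H. apply lt_0_INR. lia. Qed.

Lemma dist_lower d x0 f x l : M_class x0 d f -> (2 <= d)%nat ->
  Rsum (seq 1 (d-1)) (fun j => sigmaj f d x j * (1 - cs d j l))
  <= Dist2 (fun n => Cpown (f n) l) (fun _ => RtoC 1) x.
Proof.
  intros [_ [Hval _]] Hd.
  assert (Dpos : 0 < INR d) by (apply lt_0_INR; lia).
  set (P := primes_upto x). set (J := seq 1 (d-1)).
  set (t := fun p => (1 - Re (Cmult (Cpown (f p) l) (Cconj (RtoC 1)))) / INR p).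
  assert (HD : Dist2 (fun n => Cpown (f n) l) (fun _ => RtoC 1) x = Rsum P t) by reflexivity.
  rewrite HD.
  transitivity (Rsum J (fun j => Rsum P (fun p =>
     if Ceqb (f p) (e (INR j / INR d)) then t p else 0))).
  { right. apply Rsum_ext_in. intros j _. unfold sigmaj. fold P.
    rewrite Rmult_comm, <- Rsum_scal, Rsum_filter. apply Rsum_ext_in. intros p Hp.
    destruct (Ceqb (f p) (e (INR j / INR d))) eqn:E; [|ring].
    apply Ceqb_true in E. unfold t. rewrite E, Re_conj1, Cpown_e.
    pose proof (primes_pos x p Hp). unfold e, Re, cs; simpl. field. lra. }
  rewrite Rsum_swap. apply Rsum_le_in. intros p Hp.
  pose proof (primes_pos x p Hp) as Pp.
  assert (Ht : 0 <= t p).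
  { unfold t. rewrite Re_conj1. apply Rdiv_le_0_compat; [|lra].
    assert (Re (Cpown (f p) l) <= 1); [|lra].
    apply Re_Cpown_le1. destruct (Hval p) as [H|[k [_ H]]]; eauto. }
  apply Rsum_unique; auto.
  - apply seq_NoDup.
  - intros j k Hj Hk H1 H2. apply Ceqb_true in H1, H2. rewrite H1 in H2.
    unfold J in Hj, Hk. apply in_seq in Hj, Hk.
    assert (forall i, (1 <= i < d)%nat -> 0 <= INR i / INR d < 1).
    { intros i Hi. split. apply Rdiv_le_0_compat; [apply pos_INR|lra].
      apply (Rmult_lt_reg_r (INR d)); auto. unfold Rdiv. rewrite Rmult_assoc, Rinv_l by lra.
      rewrite Rmult_1_r, Rmult_1_l. apply lt_INR. lia. }
    apply e_inj in H2; try (apply H; lia).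
    apply INR_eq. apply (Rmult_eq_reg_r (/ INR d)). exact H2. apply Rinv_neq_0_compat. lra.
  - intros; lra.
Qed.

Lemma rpow_ge eps : 0 < eps < 1 -> eps <= Rpower eps (1/3) /\ 0 < Rpower eps (1/3).
Proof.
  intros He. unfold Rpower. split; [|apply exp_pos].
  assert (ln eps < 0) by (rewrite <- ln_1; apply ln_increasing; lra).
  rewrite <- (exp_ln eps) at 1 by lra. left. apply exp_increasing. lra.
Qed.

Theorem lemma3p2 :
  exists eps0 Cc : R, 0 < eps0 < 1 /\ 0 < Cc /\
  forall (d : nat) (x0 : R) (f : nat -> C) (x : R) (eps : R),
    (2 <= d)%nat -> 3 <= x0 -> M_class x0 d f ->
    1 <= x <= x0 ->
    0 < eps < eps0 -> eps * INR (least_prime_factor d) > 1 ->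
    (forall m : nat, (1 <= m)%nat -> (m <= d - 1)%nat ->
       sigmaj f d x m < eps * sigma_total f d x) ->
    INR (length (filter
       (fun l => if Rlt_dec (Dist2 (fun n => Cpown (f n) l) (fun _ => RtoC 1) x)
                            ((2/3 - Cc * Rpower eps (1/3)) * sigma_total f d x)
                 then true else false)
       (seq 1 (d - 1)%nat)))
    <= Cc * Rpower eps (1/3) * INR d.
Proof.
  exists (1/2), 18. split; [lra|split;[lra|]].
  intros d x0 f x eps Hd Hx0 HM Hx Heps Hlp Hsig.
  assert (Dpos : 0 < INR d) by (apply lt_0_INR; lia).
  set (J := seq 1 (d-1)) in *.
  set (S := sigma_total f d x) in *.
  assert (HSdef : S = Rsum J (sigmaj f d x)) by reflexivity.
  assert (Hs0 : forall j, 0 <= sigmaj f d x j).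
  { intros j. unfold sigmaj. apply Rsum_nonneg. intros p Hp.
    apply filter_In in Hp as [Hp _]. pose proof (primes_pos x p Hp).
    apply Rdiv_le_0_compat; lra. }
  assert (HS : 0 < S).
  { pose proof (Hsig 1%nat ltac:(lia) ltac:(lia)). pose proof (Hs0 1%nat).
    destruct (Rle_or_lt S 0); [nra|auto]. }
  assert (Hb : forall j, In j J -> 0 <= sigmaj f d x j <= eps * S).
  { intros j Hj. unfold J in Hj. apply in_seq in Hj. split; auto. left; apply Hsig; lia. }
  destruct (rpow_ge eps ltac:(lra)) as [Hpe1 Hpe2].
  set (pe := Rpower eps (1/3)) in *.
  set (G := fun l => Rsum J (fun j => sigmaj f d x j * cs d j l)).
  set (h := fun l => 9 * G l ^ 2 / S ^ 2).
  assert (Hh0 : forall l, 0 <= h l).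
  { intros l. unfold h. apply Rdiv_le_0_compat. nra. nra. }
  apply Rle_trans with (Rsum J h).
  { apply count_le; auto.
    intros l Hl Hbad.
    destruct (Rlt_dec _ _) as [Hlt|]; [|discriminate].
    pose proof (dist_lower d x0 f x l HM Hd) as Hlow. fold J in Hlow.
    assert (E : Rsum J (fun j => sigmaj f d x j * (1 - cs d j l)) = S - G l).
    { rewrite HSdef. unfold G. rewrite <- Rsum_minus. apply Rsum_ext_in. intros; ring. }
    rewrite E in Hlow.
    assert (G l > S / 3) by nra.
    unfold h, Rdiv. apply Rle_trans with (S^2 * / S^2).
    - right. field. lra.
    - apply Rmult_le_compat_r. left; apply Rinv_0_lt_compat; nra. nra. }
  apply Rle_trans with (Rsum (seq 0 d) h).
  { replace (seq 0 d) with (0%nat :: J).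
    - rewrite Rsum_cons. pose proof (Hh0 0%nat). lra.
    - unfold J. destruct d; [lia|]. simpl. rewrite Nat.sub_0_r. reflexivity. }
  assert (HF := fourier d (sigmaj f d x) (eps * S) Hd Hb ltac:(nra)).
  fold J in HF. rewrite <- HSdef in HF.
  replace (Rsum (seq 0 d) h) with (9 / S^2 * Rsum (seq 0 d) (fun l => G l ^ 2)).
  - apply Rle_trans with (9 / S^2 * (2 * INR d * (eps * S) * S)).
    + apply Rmult_le_compat_l; [|exact HF]. apply Rdiv_le_0_compat; nra.
    + replace (9 / S^2 * (2 * INR d * (eps * S) * S)) with (18 * eps * INR d) by (field; lra).
      apply Rmult_le_compat_r; [lra|]. nra.
  - rewrite <- Rsum_scal. apply Rsum_ext_in. intros. unfold h. field. lra.
Qed.
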